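(* Let $n\ge2$ and let $\lambda_1>\lambda_2>\dots>\lambda_n$ be distinct real numbers, and let $\mu_1>\dots>\mu_{n-1}$ be the critical points of $q(x)=\prod_{j=1}^n(x-\lambda_j)$ (so $\lambda_k>\mu_k>\lambda_{k+1}$). Define the $(n-1)\times n$ matrix $W$ by $$W_{kj}:=\frac{(\mu_k-\lambda_j)^{-2}}{\sum_{i=1}^n(\mu_k-\lambda_i)^{-2}}.$$ Then each $\mu_k$ is a smooth function of $(\lambda_1,\dots,\lambda_n)$ on the set of strictly decreasing tuples, with $\partial\mu_k/\partial\lambda_j=W_{kj}>0$ for all $k,j$; moreover each row of $W$ sums to $1$, each column of $W$ sums to $\frac{n-1}{n}$, and $\mu_k=\sum_{j=1}^n W_{kj}\lambda_j$ for every $k=1,\dots,n-1$. *)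

(* Defs.v *)
From HB Require Import structures.
From mathcomp Require Import all_boot all_order all_algebra.
From mathcomp Require Import all_classical all_reals all_analysis.
Set Implicit Arguments. Unset Strict Implicit. Unset Printing Implicit Defensive.
Import Order.TTheory GRing.Theory Num.Theory.
Import numFieldNormedType.Exports.
Local Open Scope ring_scope.
Local Open Scope classical_set_scope.

Section Defs.
Variable R : realType.

(* lamc l i = lambda_{i+1} (0-based coordinate i of the row vector l), 0 if out of range *)
Definition lamc (n : nat) (l : 'rV[R]_n) (i : nat) : R :=
  match insub i with Some j => l 0 j | None => 0 end.

Definition decr_tuples (n : nat) : set 'rV[R]_n :=
  [set l | forall i j : 'I_n, (i < j)%N -> l 0 j < l 0 i].

Definition lam_poly (n : nat) (l : 'rV[R]_n) : {poly R} :=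
  \prod_(j < n) ('X - (l 0 j)%:P).

(* W_{kj} as a function of m = mu_k *)
Definition Wcoef (n : nat) (m : R) (l : 'rV[R]_n) (j : 'I_n) : R :=
  (m - l 0 j) ^- 2 / \sum_(i < n) (m - l 0 i) ^- 2.

Definition ebasis (n : nat) (j : 'I_n) : 'rV[R]_n := delta_mx 0 j.

Fixpoint Ck_on (n : nat) (m : nat) (U : set 'rV[R]_n) (f : 'rV[R]_n -> R) : Prop :=
  match m with
  | 0 => forall x, U x -> {for x, continuous f}
  | m'.+1 => (forall x, U x -> {for x, continuous f}) /\
             forall v : 'rV[R]_n, (forall x, U x -> derivable f x v) /\
                                  Ck_on m' U ('D_v f)
  end.

Definition smooth_on (n : nat) (U : set 'rV[R]_n) (f : 'rV[R]_n -> R) : Prop :=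
  forall m, Ck_on m U f.

End Defs.

(* Main.v *)
Require Import Defs.
From HB Require Import structures.
From mathcomp Require Import all_boot all_order all_algebra.
From mathcomp Require Import all_classical all_reals all_analysis.
From mathcomp Require Import ring lra.
Import Order.TTheory GRing.Theory Num.Theory.
Import numFieldNormedType.Exports.
Local Open Scope ring_scope.
Local Open Scope classical_set_scope.
Set Implicit Arguments. Unset Strict Implicit.
Section Poly.
Variable R : realType.

Lemma deriv_prod_eval m (c : 'I_m -> R) x : (forall j, x != c j) ->
 (\prod_(j<m) ('X - (c j)%:P))^`().[x] =
   (\prod_(j<m) ('X - (c j)%:P)).[x] * \sum_(j<m) (x - c j)^-1.
Proof.
elim: m c => [|m IH] c hx.
  by rewrite !big_ord0 -polyC1 derivC horner0 mulr0.
rewrite big_ord_recr derivM derivXsubC mulr1 hornerD hornerM IH; last by move=> j.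
rewrite big_ord_recr /= hornerM hornerXsubC.
have hm : x - c ord_max != 0 by rewrite subr_eq0 hx.
rewrite [in RHS]mulrDr -[X in _ = _ + X]mulrA mulfV // mulr1.
by rewrite mulrAC.
Qed.

Lemma deriv_prod_root m (c : 'I_m -> R) a :
  (\prod_(j<m) ('X - (c j)%:P))^`().[c a] = \prod_(j<m | j != a) (c a - c j).
Proof.
rewrite (bigD1 a) //= derivM derivXsubC mul1r hornerD hornerM hornerXsubC subrr mul0r addr0.
by rewrite horner_prod; apply: eq_bigr => j _; rewrite hornerXsubC.
Qed.
End Poly.
Section Gap.
Variable R : realType.
Variable n : nat.
Local Notation U := (@decr_tuples R n).

Definition Fl (l : 'rV[R]_n) (x : R) := \sum_(i < n) (x - l 0 i)^-1.

Lemma decr_le (l : 'rV[R]_n) : U l -> forall i j : 'I_n, (i <= j)%N -> l 0 j <= l 0 i.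
Proof. move=> hl i j; rewrite leq_eqVlt => /orP[/eqP/val_inj->//|/hl/ltW//]. Qed.

Lemma lamcE (l : 'rV[R]_n) (i : 'I_n) : lamc l i = l 0 i.
Proof. by rewrite /lamc; case: insubP => [j _ /val_inj->|]; rewrite ?ltn_ord. Qed.

Section K.
Variable k : nat.
Hypothesis hk : (k.+1 < n)%N.
Let a : 'I_n := Ordinal (ltnW hk).
Let b : 'I_n := Ordinal hk.

Definition ingap (l : 'rV[R]_n) x := l 0 b < x < l 0 a.

Lemma gap_sign l x : U l -> ingap l x -> forall j : 'I_n,
  ((j <= k)%N -> x < l 0 j) /\ ((k < j)%N -> l 0 j < x).
Proof.
move=> hl /andP[h1 h2] j; split=> hj.
  by apply: (lt_le_trans h2); apply: decr_le.
by apply: le_lt_trans h1; apply: decr_le.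
Qed.

Lemma gap_neq l x : U l -> ingap l x -> forall j : 'I_n, x - l 0 j != 0.
Proof.
move=> hl hx j; rewrite subr_eq0; have [h1 h2] := gap_sign hl hx j.
by case: (leqP j k) => hj; [rewrite lt_eqF ?h1 | rewrite gt_eqF ?h2].
Qed.

Lemma gap_prod_pos l x y : U l -> ingap l x -> ingap l y -> forall j : 'I_n,
  0 < (x - l 0 j) * (y - l 0 j).
Proof.
move=> hl hx hy j; have [h1 h2] := gap_sign hl hx j; have [h3 h4] := gap_sign hl hy j.
case: (leqP j k) => hj.
  by rewrite nmulr_rgt0 subr_lt0 ?h1 ?h3.
by apply: mulr_gt0; rewrite subr_gt0 ?h2 ?h4.
Qed.

Lemma Fl_decr l x y : U l -> ingap l x -> ingap l y -> x < y -> Fl l y < Fl l x.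
Proof.
move=> hl hx hy xy; rewrite /Fl; apply: ltr_sum.
  by apply/hasP; exists a => //; rewrite mem_index_enum.
move=> j _; have hxj := gap_neq hl hx j; have hyj := gap_neq hl hy j.
have hp := gap_prod_pos hl hx hy j.
rewrite -subr_gt0.
have -> : (x - l 0 j)^-1 - (y - l 0 j)^-1 = (y - x) / ((x - l 0 j) * (y - l 0 j)).
  by field; rewrite hxj hyj.
by apply: divr_gt0; rewrite ?subr_gt0.
Qed.

Lemma Fl_uniq l x y : U l -> ingap l x -> ingap l y -> Fl l x = 0 -> Fl l y = 0 -> x = y.
Proof.
move=> hl hx hy fx fy; case: (ltgtP x y) => // xy.
  by have := Fl_decr hl hx hy xy; rewrite fx fy ltxx.
by have := Fl_decr hl hy hx xy; rewrite fx fy ltxx.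
Qed.

Lemma mu_exists l : U l -> exists x, ingap l x /\ Fl l x = 0.
Proof.
move=> hl.
set q := \prod_(j<n) ('X - (l 0 j)%:P).
have qa := deriv_prod_root (fun j => l 0 j) a.
have qb := deriv_prod_root (fun j => l 0 j) b.
have ba : b != a by rewrite -val_eqE /= eqn_leq ltnn.
have lab : l 0 b < l 0 a by apply: hl => /=.
have hlt : (q^`()).[l 0 a] * (q^`()).[l 0 b] < 0.
  rewrite qa qb [\prod_(j < n | j != a) _](bigD1 b) //.
  rewrite [\prod_(j < n | j != b) _](bigD1 a) //=; last by rewrite eq_sym.
  rewrite [X in _ * (_ * X)](eq_bigl (fun j => (j != a) && (j != b))); last by move=> j; rewrite andbC.
  set P1 := \prod_(j < n | _) _; set P2 := \prod_(j < n | _) _.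
  have hP : 0 < P1 * P2.
    rewrite /P1 /P2 -big_split /=; apply: prodr_gt0 => j /andP[ja jb].
    case: (ltnP j k) => hj.
      have h1 : l 0 a < l 0 j by apply: hl.
      by rewrite nmulr_rgt0 subr_lt0 // (lt_trans lab).
    have hj' : (k.+1 < j)%N.
      rewrite ltn_neqAle eq_sym; apply/andP; split; first by rewrite -val_eqE in jb.
      rewrite ltn_neqAle hj andbT eq_sym; by rewrite -val_eqE in ja.
    have h1 : l 0 j < l 0 b by apply: hl.
    by apply: mulr_gt0; rewrite subr_gt0 // (lt_trans h1).
  have -> : (l 0 a - l 0 b) * P1 * ((l 0 b - l 0 a) * P2) = - ((l 0 a - l 0 b)^+2 * (P1 * P2)) by ring.
  rewrite oppr_lt0; apply: mulr_gt0 => //; apply: exprn_gt0; by rewrite subr_gt0.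
have fa0 : (q^`()).[l 0 a] != 0 by apply: contraTneq hlt => ->; rewrite mul0r ltxx.
have fb0 : (q^`()).[l 0 b] != 0 by apply: contraTneq hlt => ->; rewrite mulr0 ltxx.
have hmm : Num.min ((horner q^`()) (l 0 b)) ((horner q^`()) (l 0 a)) <= 0 <=
    Num.max ((horner q^`()) (l 0 b)) ((horner q^`()) (l 0 a)).
  rewrite /=.
  set u := (q^`()).[l 0 a] in hlt fa0 *; set w := (q^`()).[l 0 b] in hlt fb0 *.
  rewrite ge_min le_max.
  case: (ltgtP w 0) => hw; case: (ltgtP u 0) => hu; rewrite ?orbT //=; try nra.
have [c hc fc] := @IVT R (horner q^`()) (l 0 b) (l 0 a) 0 (ltW lab)
   (continuous_subspaceT (@continuous_horner R q^`())) hmm.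
have hcx : ingap l c.
  rewrite in_itv /= in hc; case/andP: hc => h1 h2.
  have hcb : l 0 b != c by apply: contraNneq fb0 => ->; apply/eqP.
  have hca : c != l 0 a by apply: contraNneq fa0 => <-; apply/eqP.
  by rewrite /ingap !lt_neqAle hcb hca h1 h2.
exists c; split => //.
move: fc => /=; rewrite deriv_prod_eval; last first.
  by move=> j; rewrite -subr_eq0; apply: gap_neq.
move/eqP; rewrite mulf_eq0 => /orP[|/eqP//].
rewrite horner_prod prodf_seq_eq0 => /hasP[j _ /andP[_]].
by rewrite hornerXsubC (negbTE (gap_neq hl hcx j)).
Qed.

Lemma gap_prod_pos2 l l' x y : U l -> U l' -> ingap l x -> ingap l' y -> forall j : 'I_n,
  0 < (x - l 0 j) * (y - l' 0 j).
Proof.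
move=> hl hl' hx hy j; have [h1 h2] := gap_sign hl hx j; have [h3 h4] := gap_sign hl' hy j.
case: (leqP j k) => hj.
  by rewrite nmulr_rgt0 subr_lt0 ?h1 ?h3.
by apply: mulr_gt0; rewrite subr_gt0 ?h2 ?h4.
Qed.

End K.

Lemma cvg_sumR (T : Type) (F : set_system T) (FF : Filter F) m
  (f : 'I_m -> T -> R) (c : 'I_m -> R) :
  (forall i, f i x @[x --> F] --> c i) -> \sum_(i < m) f i x @[x --> F] --> \sum_(i < m) c i.
Proof.
elim: m f c => [|m IH] f c h.
  rewrite big_ord0; under eq_cvg do rewrite big_ord0; exact: cvg_cst.
rewrite big_ord_recr; under eq_cvg do rewrite big_ord_recr.
apply: cvgD; [exact: (IH (fun i => f (widen_ord (leqnSn m) i))) | exact: h].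
Qed.

Lemma near_U (l : 'rV[R]_n) : U l -> \forall l' \near l, U l'.
Proof.
move=> hl.
have FF : Filter (nbhs l) by exact: _.
have H1 : forall i j : 'I_n, \forall l' \near l, ((i < j)%N -> (l' : 'rV[R]_n) 0 j < l' 0 i).
  move=> i j.
  case: (ltnP i j) => hij; last first.
    near=> x; by [].
  have H := @cvgB _ _ _ _ FF _ _ _ _ (@coord_continuous R 1 n 0 i l) (@coord_continuous R 1 n 0 j l).
  have hp : 0 < l 0 i - l 0 j by rewrite subr_gt0; apply: hl.
  near=> x => _; rewrite -subr_gt0; near: x.
  exact: (@cvgr_gt _ _ _ FF _ _ H 0 hp).
have H2 := fun i => filter_forall FF (H1 i).
have := filter_forall FF H2.
by apply: filterS => x.
Unshelve. all: by end_near.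
Qed.

Definition mu (k : nat) (l : 'rV[R]_n) : R :=
  xget 0 [set x | lamc l k.+1 < x < lamc l k /\ Fl l x = 0].

Lemma mu_spec k (hk : (k.+1 < n)%N) l : U l -> ingap hk l (mu k l) /\ Fl l (mu k l) = 0.
Proof.
move=> hl.
have e1 : lamc l k.+1 = l 0 (Ordinal hk) := lamcE l (Ordinal hk).
have e2 : lamc l k = l 0 (Ordinal (ltnW hk)) := lamcE l (Ordinal (ltnW hk)).
have := @xgetPex _ 0 [set x | lamc l k.+1 < x < lamc l k /\ Fl l x = 0].
rewrite /mu e1 e2; apply; exact: mu_exists.
Qed.

Lemma Fl_cvg (x : R) (l : 'rV[R]_n) : (forall j, x - l 0 j != 0) ->
  Fl l' x @[l' --> l] --> Fl l x.
Proof.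
move=> hx; have FF : Filter (nbhs l) by exact: _.
apply: (cvg_sumR FF) => j; apply: cvgV => //.
exact: (@cvgB _ _ _ _ FF _ _ _ _ (cvg_cst _) (@coord_continuous R 1 n 0 j l)).
Qed.

Lemma mu_cont k (hk : (k.+1 < n)%N) (l : 'rV[R]_n) : U l -> {for l, continuous (mu k)}.
Proof.
move=> hl; set a : 'I_n := Ordinal (ltnW hk); set b : 'I_n := Ordinal hk.
have [hg hF] := mu_spec hk hl.
set m := mu k l in hg hF *.
have lab : l 0 b < l 0 a by apply: hl => /=.
case/andP: (hg) => hb ha.
have FF : Filter (nbhs l) by exact: _.
apply/(@cvgrPdist_lt _ _ _ _ FF) => e e0.
pose d := Num.min e (Num.min (m - l 0 b) (l 0 a - m)) / 2.
have d0 : 0 < d.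
  by rewrite divr_gt0 // lt_min e0 lt_min !subr_gt0 hb ha.
have de : d < e.
  rewrite /d ltr_pdivrMr // (@le_lt_trans _ _ e) ?ge_min ?lexx //.
  by rewrite mulr_natr mulr2n ltrDr.
have dm : d < Num.min (m - l 0 b) (l 0 a - m).
  rewrite /d ltr_pdivrMr // mulr_natr mulr2n.
  have hp : 0 < Num.min (m - l 0 b) (l 0 a - m) by rewrite lt_min !subr_gt0 hb ha.
  apply: (@le_lt_trans _ _ (Num.min (m - l 0 b) (l 0 a - m))).
    by rewrite ge_min lexx orbT.
  by rewrite ltrDr.
have [d1 d2] : d < m - l 0 b /\ d < l 0 a - m by move: dm; rewrite lt_min => /andP.
have g1 : ingap hk l (m - d) by rewrite /ingap -/a -/b; apply/andP; split; lra.
have g2 : ingap hk l (m + d) by rewrite /ingap -/a -/b; apply/andP; split; lra.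
have F1 : 0 < Fl l (m - d) by rewrite -hF; apply: Fl_decr hl g1 hg _; lra.
have F2 : Fl l (m + d) < 0 by rewrite -hF; apply: Fl_decr hl hg g2 _; lra.
have C1 := Fl_cvg (gap_neq hl g1).
have C2 := Fl_cvg (gap_neq hl g2).
have Cb := @coord_continuous R 1 n 0 b l.
have Ca := @coord_continuous R 1 n 0 a l.
near=> l'.
have hl' : U l' by near: l'; exact: near_U.
have [hg' hF'] := mu_spec hk hl'.
have f1 : 0 < Fl l' (m - d) by near: l'; exact: (@cvgr_gt _ _ _ FF _ _ C1 0 F1).
have f2 : Fl l' (m + d) < 0 by near: l'; exact: (@cvgr_lt _ _ _ FF _ _ C2 0 F2).
have b' : l' 0 b < m - d by near: l'; apply: (@cvgr_lt _ _ _ FF _ _ Cb); lra.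
have a' : m + d < l' 0 a by near: l'; apply: (@cvgr_gt _ _ _ FF _ _ Ca); lra.
have g1' : ingap hk l' (m - d) by rewrite /ingap -/a -/b; apply/andP; split; lra.
have g2' : ingap hk l' (m + d) by rewrite /ingap -/a -/b; apply/andP; split; lra.
have lo : m - d < mu k l'.
  case: (ltgtP (m - d) (mu k l')) => // h.
    by have := Fl_decr hl' hg' g1' h; rewrite hF'; lra.
  by move: f1; rewrite h hF' ltxx.
have hi : mu k l' < m + d.
  case: (ltgtP (mu k l') (m + d)) => // h.
    by have := Fl_decr hl' g2' hg' h; rewrite hF'; lra.
  by move: f2; rewrite -h hF' ltxx.
rewrite ltr_distlC -/m; apply/andP; split; lra.
Unshelve. all: by end_near.
Qed.


Definition Dval (l v : 'rV[R]_n) (x : R) :=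
  (\sum_(j < n) v 0 j * ((x - l 0 j) * (x - l 0 j))^-1) *
  (\sum_(j < n) ((x - l 0 j) * (x - l 0 j))^-1)^-1.

Lemma sum_pos (f : 'I_n -> R) (i0 : 'I_n) : (forall j, 0 < f j) -> 0 < \sum_j f j.
Proof.
move=> hf; rewrite (bigD1 i0) //=.
have : 0 <= \sum_(j < n | j != i0) f j by apply: sumr_ge0 => j _; exact: ltW.
have := hf i0; lra.
Qed.

Lemma mu_der k (hk : (k.+1 < n)%N) (l v : 'rV[R]_n) : U l ->
  (fun h : R => h^-1 *: ((mu k \o shift l) (h *: v) - mu k l)) @ 0^' --> Dval l v (mu k l).
Proof.
move=> hl.
have a0 : 'I_n := Ordinal (ltnW hk).
have [hg hF] := mu_spec hk hl.
set m := mu k l in hg hF *.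
have F0 : Filter (0^' : set_system R) by exact: _.
have hid : (fun h : R => h) @ 0^' --> (0:R) by exact: cvg_within.
have hs := @cvgZr_tmp _ _ _ _ F0 _ _ v hid.
have Cline := @cvgD _ _ _ _ F0 _ _ _ _ hs (@cvg_cst _ l _ _ F0).
rewrite scale0r add0r in Cline.
have hmu : (fun h : R => mu k (h *: v + l)) @ 0^' --> m.
  exact: (cvg_comp _ _ Cline (mu_cont hk hl)).
have hco : forall j, (fun h : R => (h *: v + l) 0 j) @ 0^' --> l 0 j.
  move=> j; exact: (cvg_comp _ _ Cline (@coord_continuous R 1 n 0 j l)).
pose P j (h : R) := (m - l 0 j) * (mu k (h *: v + l) - (h *: v + l) 0 j).
pose G (h : R) := (\sum_j v 0 j * (P j h)^-1) * (\sum_j (P j h)^-1)^-1.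
have hP : forall j, P j h @[h --> 0^'] --> (m - l 0 j) * (m - l 0 j).
  move=> j; apply: cvgM; first exact: cvg_cst.
  exact: cvgB.
have hP0 : forall j, (m - l 0 j) * (m - l 0 j) != 0.
  by move=> j; rewrite mulf_neq0 // (gap_neq hl hg).
have hS0 : 0 < \sum_j ((m - l 0 j) * (m - l 0 j))^-1.
  apply: (sum_pos a0) => j; rewrite invr_gt0.
  exact: (gap_prod_pos hl hg hg).
have hG : G h @[h --> 0^'] --> Dval l v m.
  apply: cvgM.
    apply: cvg_sumR => j; apply: cvgM; first exact: cvg_cst.
    exact: cvgV.
  apply: cvgV; first by rewrite gt_eqF.
  apply: cvg_sumR => j; exact: cvgV.
apply: cvg_trans hG.
apply: near_eq_cvg.
have hU := Cline _ (near_U hl).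
near=> h.
have h0 : h != 0 by near: h; exact: nbhs_dnbhs_neq.
have hl' : U (h *: v + l) by near: h; exact: hU.
have [hg' hF'] := mu_spec hk hl'.
set l' := h *: v + l in hl' hg' hF' *.
set m' := mu k l' in hg' hF' *.
rewrite /= /shift /= -/l' -/m'.
have Pp : forall j, 0 < P j h by move=> j; exact: (gap_prod_pos2 hl hl' hg hg').
have S0p : 0 < \sum_j (P j h)^-1 by apply: (sum_pos a0) => j; rewrite invr_gt0.
have key : forall j, (m' - l' 0 j)^-1 - (m - l 0 j)^-1 = ((m - m') + h * v 0 j) * (P j h)^-1.
  move=> j; have n1 := gap_neq hl hg j; have n2 := gap_neq hl' hg' j.
  rewrite /P -/l' -/m' {1}/l' !mxE.
  rewrite /l' !mxE in n2.
  by field; rewrite n1 n2.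
have E : (m - m') * \sum_j (P j h)^-1 + h * \sum_j v 0 j * (P j h)^-1 = 0.
  rewrite !mulr_sumr -big_split /=.
  transitivity (Fl l' m' - Fl l m); last by rewrite hF hF' subrr.
  rewrite /Fl -sumrB; apply: eq_bigr => j _; rewrite key; ring.
rewrite /G; set S0 := \sum_j (P j h)^-1 in S0p E *; set S1 := \sum_j v 0 j * (P j h)^-1 in E *.
have S0n : S0 != 0 by rewrite gt_eqF.
symmetry; rewrite /GRing.scale /=.
apply: (mulIf S0n); rewrite mulfVK //.
apply: (mulfI h0); rewrite !mulrA mulfV // mul1r.
nra.
Unshelve. all: by end_near.
Qed.

End Gap.
Section Expr.
Variable R : realType.
Variable n : nat.

Inductive expr : Type :=
 | EMu | ELam of 'I_n | ECst of R | EAdd of expr & expr | EMul of expr & expr | EInv of expr.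

Variable U : set 'rV[R]_n.
Hypothesis Uopen : forall l : 'rV[R]_n, U l -> \forall l' \near l, U l'.
Variable mu : 'rV[R]_n -> R.
Variable Dmu : 'rV[R]_n -> expr.

Fixpoint eval (e : expr) (l : 'rV[R]_n) : R :=
  match e with
  | EMu => mu l
  | ELam j => l 0 j
  | ECst c => c
  | EAdd a b => eval a l + eval b l
  | EMul a b => eval a l * eval b l
  | EInv a => (eval a l)^-1
  end.

Fixpoint good (e : expr) : Prop :=
  match e with
  | EAdd a b | EMul a b => good a /\ good b
  | EInv a => good a /\ (forall l, U l -> eval a l != 0)
  | _ => True
  end.

Fixpoint dE (v : 'rV[R]_n) (e : expr) : expr :=
  match e with
  | EMu => Dmu v
  | ELam j => ECst (v 0 j)
  | ECst _ => ECst 0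
  | EAdd a b => EAdd (dE v a) (dE v b)
  | EMul a b => EAdd (EMul (dE v a) b) (EMul a (dE v b))
  | EInv a => EMul (ECst (-1)) (EMul (dE v a) (EMul (EInv a) (EInv a)))
  end.

Hypothesis mu_cont : forall l, U l -> {for l, continuous mu}.
Hypothesis mu_der : forall v l, U l -> derivable mu l v /\ 'D_v mu l = eval (Dmu v) l.
Hypothesis Dmu_good : forall v, good (Dmu v).

Lemma good_dE v e : good e -> good (dE v e).
Proof.
elim: e => //= [a IHa b IHb [ga gb]|a IHa b IHb [ga gb]|a IHa [ga na]]; do ?split => //; auto.
Qed.

Lemma eval_cont e : good e -> forall l, U l -> {for l, continuous (eval e)}.
Proof.
move=> + l hl; have FF : Filter (nbhs l) by exact: _.
elim: e => /= [_|j _|c _|a IHa b IHb [ga gb]|a IHa b IHb [ga gb]|a IHa [ga na]].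
- exact: mu_cont.
- exact: (@coord_continuous R 1 n 0 j l).
- exact: (@cvg_cst _ c _ _ FF).
- exact: (@cvgD _ _ _ _ FF _ _ _ _ (IHa ga) (IHb gb)).
- exact: (@cvgM _ _ _ FF _ _ _ _ (IHa ga) (IHb gb)).
- exact: (@cvgV _ _ _ FF _ _ (na l hl) (IHa ga)).
Qed.

Lemma coord_cvg (l v : 'rV[R]_n) j :
  (fun h : R => h^-1 *: (((fun l' : 'rV[R]_n => l' 0 j) \o shift l) (h *: v) - l 0 j)) @ 0^' --> v 0 j.
Proof.
have F0 : Filter (0^' : set_system R) by exact: _.
apply: cvg_trans (@cvg_cst _ (v 0 j) _ _ F0).
apply: near_eq_cvg; near=> h.
have h0 : h != 0 by near: h; exact: nbhs_dnbhs_neq.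
rewrite /= /shift /= !mxE addrK /GRing.scale /= mulrA mulVf // mul1r //.
Unshelve. all: by end_near.
Qed.

Lemma eval_der v e : good e -> forall l, U l ->
  derivable (eval e) l v /\ 'D_v (eval e) l = eval (dE v e) l.
Proof.
move=> + l hl.
elim: e => /= [_|j _|c _|a IHa b IHb [ga gb]|a IHa b IHb [ga gb]|a IHa [ga na]].
- exact: mu_der.
- have H := @coord_cvg l v j; split; first by apply/cvg_ex; exists (v 0 j).
  exact: cvg_lim H.
- split; [exact: derivable_cst | exact: derive_cst].
- have [da Da] := IHa ga; have [db Db] := IHb gb.
  split; first exact: (derivableD da db).
  by have := deriveD da db; rewrite Da Db.
- have [da Da] := IHa ga; have [db Db] := IHb gb.
  split; first exact: (derivableM da db).
  have := deriveM da db; rewrite Da Db => ->.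
  by rewrite /GRing.scale /=; ring.
- have [da Da] := IHa ga.
  split; first exact: (derivableV (na l hl) da).
  have := deriveV (na l hl) da; rewrite Da => ->.
  by rewrite /GRing.scale /= -exprVn expr2; ring.
Qed.

Lemma Ck_loc m (f g : 'rV[R]_n -> R) : (forall l, U l -> f l = g l) -> Ck_on m U f -> Ck_on m U g.
Proof.
have cont : forall f g : 'rV[R]_n -> R, (forall l, U l -> f l = g l) ->
    forall l, U l -> {for l, continuous f} -> {for l, continuous g}.
  move=> f0 g0 fg l hl cf; have FF : Filter (nbhs l) by exact: _.
  rewrite /prop_for /continuous_at -(fg l hl).
  apply: cvg_trans cf; apply: near_eq_cvg.
  by apply: filterS (Uopen hl) => x /fg.
elim: m f g => [|m IH] f g fg /=.
  by move=> cf l hl; apply: (cont f) => //; exact: cf.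
move=> [cf dv]; split; first by move=> l hl; apply: (cont f) => //; exact: cf.
move=> v; have [d1 d2] := dv v; split.
  move=> l hl; apply: near_eq_derivable (d1 l hl).
  by apply: filterS (Uopen hl) => x /fg.
apply: IH d2 => l hl; apply: near_eq_derive.
by apply: filterS (Uopen hl) => x /fg.
Qed.

Lemma eval_Ck m e : good e -> Ck_on m U (eval e).
Proof.
elim: m e => [|m IH] e ge /=; first exact: eval_cont.
split; first exact: eval_cont.
move=> v; split; first by move=> l hl; have [] := eval_der v ge hl.
apply: (@Ck_loc m (eval (dE v e))); last by apply: IH; exact: good_dE.
by move=> l hl; have [_ ->] := eval_der v ge hl.
Qed.

End Expr.

Section Final.
Variable R : realType.
Variable n : nat.
Local Notation U := (@decr_tuples R n).

Lemma mu_derD k (hk : (k.+1 < n)%N) (l v : 'rV[R]_n) : U l ->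
  derivable (mu k) l v /\ 'D_v (mu k) l = Dval l v (mu k l).
Proof.
move=> hl; have H := mu_der hk (v:=v) hl.
by split; [apply/cvg_ex; eexists; exact: H | exact: cvg_lim H].
Qed.

Definition SumE (f : 'I_n -> expr R n) := \big[@EAdd R n/@ECst R n 0]_(j < n) f j.
Definition DiffE (j : 'I_n) : expr R n := EAdd (@EMu R n) (EMul (@ECst R n (-1)) (@ELam R n j)).
Definition W2 (j : 'I_n) := EInv (EMul (DiffE j) (DiffE j)).
Definition DmuE (v : 'rV[R]_n) := EMul (SumE (fun j => EMul (@ECst R n (v 0 j)) (W2 j))) (EInv (SumE W2)).

Lemma eval_SumE (m : 'rV[R]_n -> R) f l : eval m (SumE f) l = \sum_j eval m (f j) l.
Proof. exact: (big_morph (fun e => eval m e l) (fun a b => erefl) erefl). Qed.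

Lemma good_SumE (m : 'rV[R]_n -> R) f : (forall j, good U m (f j)) -> good U m (SumE f).
Proof. by move=> h; rewrite /SumE; elim/big_rec: _ => //= j x _ hx; split. Qed.

Lemma eval_DmuE k (v l : 'rV[R]_n) : eval (mu k) (DmuE v) l = Dval l v (mu k l).
Proof.
rewrite /DmuE /= !eval_SumE /Dval /=.
by congr (_ * _^-1); apply: eq_bigr => j _ /=; rewrite mulN1r.
Qed.

Lemma good_DmuE k (hk : (k.+1 < n)%N) v : good U (mu k) (DmuE v).
Proof.
have a0 : 'I_n := Ordinal (ltnW hk).
have gW : forall j, good U (mu k) (W2 j).
  move=> j /=; split; first by do !split.
  move=> l hl; rewrite mulN1r.
  have [hg _] := mu_spec hk hl.
  rewrite mulf_neq0 //; exact: (gap_neq hl hg j).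
split; first by apply: good_SumE => j /=; split => //; exact: gW.
split; first exact: good_SumE.
move=> l hl; rewrite eval_SumE gt_eqF //.
have [hg _] := mu_spec hk hl.
apply: (sum_pos a0) => j /=; rewrite invr_gt0 mulN1r.
exact: (gap_prod_pos hl hg hg).
Qed.

Lemma mu_smooth k (hk : (k.+1 < n)%N) : smooth_on U (mu k).
Proof.
move=> m.
have hder : forall (v l : 'rV[R]_n), U l ->
    derivable (mu k) l v /\ 'D_v (mu k) l = eval (mu k) (DmuE v) l.
  by move=> v l hl; rewrite eval_DmuE; exact: mu_derD.
exact: (eval_Ck (@near_U R n) (mu_cont hk) hder (good_DmuE hk) m (e:=@EMu R n) I).
Qed.


Lemma mu_mono (l : 'rV[R]_n) k k' (hk : (k.+1 < n)%N) (hk' : (k'.+1 < n)%N) : U l ->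
  (k < k')%N -> mu k' l < mu k l.
Proof.
move=> hl kk.
have [/andP[h1 _] _] := mu_spec hk hl.
have [/andP[_ h2] _] := mu_spec hk' hl.
apply: (lt_trans h2); apply: le_lt_trans h1; exact: decr_le.
Qed.

Lemma sum_mu (hn : (1 < n)%N) (l : 'rV[R]_n) : U l ->
  (\sum_(k < n.-1) mu k l) * n%:R = (n.-1)%:R * \sum_(i < n) l 0 i.
Proof.
move=> hl.
have hkk : forall k : 'I_n.-1, (k.+1 < n)%N by move=> k; rewrite -ltn_predRL.
have n0 : (0 < n)%N by apply: ltnW.
set q := \prod_(j < n) ('X - (l 0 j)%:P).
set rs := map (fun k : 'I_n.-1 => mu k l) (index_enum 'I_n.-1).
have srs : size rs = n.-1 by rewrite size_map [index_enum _]unlock -enumT size_enum_ord.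
have sq : size q = n.+1 by rewrite size_prod_XsubC [index_enum _]unlock -enumT size_enum_ord.
have mq : q \is monic by apply: monic_prod_XsubC.
have qn : q`_n = 1 by have := mq; rewrite monicE lead_coefE sq /= => /eqP.
have cq : (deriv q)`_n.-1 = n%:R by rewrite coef_deriv prednK // qn.
have sq' : size (deriv q) = n.
  apply/eqP; rewrite eqn_leq; apply/andP; split.
    by have := lt_size_deriv (monic_neq0 mq); rewrite sq ltnS.
  case: (ltnP n.-1 (size (deriv q))) => [|h]; first by rewrite prednK.
  move: cq; rewrite nth_default // => /esym/eqP; rewrite pnatr_eq0 => /eqP n00.
  by move: n0; rewrite n00.
have roots : all (root (deriv q)) rs.
  apply/allP => x /mapP[k _ ->]; rewrite /root.
  have [hg hF] := mu_spec (hkk k) hl.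
  rewrite /q deriv_prod_eval; last by move=> j; rewrite -subr_eq0 (gap_neq hl hg).
  by rewrite /= -/(Fl l (mu k l)) hF mulr0.
have inj : injective (fun k : 'I_n.-1 => mu k l).
  move=> k k' /= e; apply/val_inj/eqP; rewrite eqn_leq; apply/andP; split; rewrite leqNgt; apply/negP => h.
    by have := mu_mono (hkk k') (hkk k) hl h; rewrite e ltxx.
  by have := mu_mono (hkk k) (hkk k') hl h; rewrite e ltxx.
have urs : uniq_roots rs.
  by rewrite uniq_rootsE (map_inj_uniq inj) index_enum_uniq.
have hs : size (deriv q) = (size rs).+1 by rewrite sq' srs prednK.
have E := all_roots_prod_XsubC hs roots urs.
have lq : lead_coef (deriv q) = n%:R by rewrite lead_coefE sq'.
rewrite lq in E.
have cq1 : q`_(n.-1) = - \sum_(i < n) l 0 i.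
  have sz : size (map (fun j : 'I_n => l 0 j) (index_enum 'I_n)) = n.
    by rewrite size_map [index_enum _]unlock -enumT size_enum_ord.
  have := @coefPn_prod_XsubC R (map (fun j : 'I_n => l 0 j) (index_enum 'I_n)).
  rewrite sz -lt0n n0 !big_map => h; exact: h.
have := f_equal (fun p : {poly R} => p`_((size rs).-1)) E; rewrite /= coefZ.
rewrite coefPn_prod_XsubC; last by rewrite srs -lt0n ltn_predRL.
rewrite coef_deriv prednK; last by rewrite srs ltn_predRL.
rewrite srs cq1 -mulr_natr big_map => h.
nra.
Qed.


Lemma Wcoef_pos k (hk : (k.+1 < n)%N) (l : 'rV[R]_n) j : U l -> 0 < Wcoef (mu k l) l j.
Proof.
move=> hl; have [hg _] := mu_spec hk hl.
have a0 : 'I_n := Ordinal (ltnW hk).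
rewrite /Wcoef; apply: divr_gt0.
  by rewrite expr2 invr_gt0; exact: (gap_prod_pos hl hg hg j).
by apply: (sum_pos a0) => i; rewrite expr2 invr_gt0; exact: (gap_prod_pos hl hg hg i).
Qed.

Lemma Dval_ebasis (l : 'rV[R]_n) j m : Dval l (ebasis R j) m = Wcoef m l j.
Proof.
have e : forall x : R, x ^- 2 = (x * x)^-1 by move=> x; rewrite expr2.
rewrite /Dval /Wcoef e; under [X in _ = _ / X]eq_bigr do rewrite e.
rewrite (bigD1 j) //= big1 ?addr0; last first.
  by move=> i ij; rewrite /ebasis mxE (negbTE ij) andbF mul0r.
by rewrite /ebasis mxE !eqxx mul1r.
Qed.

Lemma Wsum_pos k (hk : (k.+1 < n)%N) (l : 'rV[R]_n) : U l ->
  0 < \sum_(i < n) (mu k l - l 0 i) ^- 2.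
Proof.
move=> hl; have [hg _] := mu_spec hk hl.
have a0 : 'I_n := Ordinal (ltnW hk).
by apply: (sum_pos a0) => i; rewrite expr2 invr_gt0; exact: (gap_prod_pos hl hg hg i).
Qed.

Lemma row_sum k (hk : (k.+1 < n)%N) (l : 'rV[R]_n) : U l ->
  \sum_(j < n) Wcoef (mu k l) l j = 1.
Proof.
move=> hl; rewrite /Wcoef -mulr_suml mulfV //.
by rewrite gt_eqF // (Wsum_pos hk hl).
Qed.

Lemma mu_comb k (hk : (k.+1 < n)%N) (l : 'rV[R]_n) : U l ->
  mu k l = \sum_(j < n) Wcoef (mu k l) l j * l 0 j.
Proof.
move=> hl; have [hg hF] := mu_spec hk hl.
set m := mu k l in hg hF *.
have S0 := Wsum_pos hk hl; rewrite -/m in S0.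
have Z : \sum_j Wcoef m l j * (m - l 0 j) = 0.
  transitivity (Fl l m / \sum_(i < n) (m - l 0 i) ^- 2); last by rewrite hF mul0r.
  rewrite /Fl mulr_suml; apply: eq_bigr => j _; rewrite /Wcoef.
  have nj := gap_neq hl hg j.
  by field; rewrite nj gt_eqF.
rewrite (eq_bigr (fun j => Wcoef m l j * m - Wcoef m l j * (m - l 0 j))); last first.
  by move=> j _; ring.
by rewrite sumrB Z subr0 -mulr_suml row_sum // mul1r.
Qed.

Lemma dE_SumE (Dm : 'rV[R]_n -> expr R n) v f : dE Dm v (SumE f) = SumE (fun j => dE Dm v (f j)).
Proof. exact: (big_morph (dE Dm v) (fun a b => erefl) erefl). Qed.

Lemma col_sum (hn : (2 <= n)%N) (l : 'rV[R]_n) j : U l ->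
  \sum_(k < n.-1) Wcoef (mu k l) l j = (n.-1)%:R / n%:R.
Proof.
move=> hl.
have hk_of : forall k : 'I_n.-1, (k.+1 < n)%N by move=> k; rewrite -ltn_predRL.
have n0 : (0 < n)%N by apply: ltnW.
have nn0 : (n%:R : R) != 0 by rewrite pnatr_eq0 -lt0n.
set c : R := (n.-1)%:R / n%:R.
pose e : expr R n := EMul (@ECst R n c) (SumE (fun i => @ELam R n i)).
have hd : forall k : 'I_n.-1, derivable (mu k) l (ebasis R j).
  by move=> k; have [] := mu_derD (hk_of k) (ebasis R j) hl.
transitivity (\sum_(k < n.-1) 'D_(ebasis R j) (mu k) l).
  apply: eq_bigr => k _; have [_ ->] := mu_derD (hk_of k) (ebasis R j) hl.
  by rewrite Dval_ebasis.
rewrite -(derive_sum hd).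
have hk0 : (0.+1 < n)%N by [].
have hder0 : forall (v l : 'rV[R]_n), U l ->
    derivable (mu 0) l v /\ 'D_v (mu 0) l = eval (mu 0) (DmuE v) l.
  by move=> v l' hl'; rewrite eval_DmuE; exact: mu_derD.
have ge : good U (mu 0) e by split => //; apply: good_SumE.
have [_ De] := eval_der hder0 (ebasis R j) ge hl.
have -> : 'D_(ebasis R j) (\sum_(k < n.-1) mu k) l = 'D_(ebasis R j) (eval (mu 0) e) l.
  apply: near_eq_derive; apply: filterS (near_U hl) => x hx.
  rewrite fct_sumE /= eval_SumE /=.
  apply: (mulIf nn0); rewrite sum_mu // /c; field; exact: nn0.
rewrite De /= dE_SumE eval_SumE /= mul0r add0r.
rewrite eval_SumE /= (bigD1 j) //= big1 ?addr0; last first.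
  by move=> i ij; rewrite /ebasis mxE (negbTE ij) andbF.
by rewrite /ebasis mxE !eqxx mulr1.
Qed.

End Final.

Unset Implicit Arguments.

Theorem mainTheorem4 (R : realType) (n : nat) (hn : (2 <= n)%N) :
  exists mu : nat -> 'rV[R]_n -> R,
    (forall k : nat, (k < n.-1)%N ->
      [/\ (* mu k is the k-th critical point of q, lying in (lambda_{k+1}, lambda_k) *)
          forall l, decr_tuples l ->
            lamc l k.+1 < mu k l < lamc l k /\ (deriv (lam_poly l)).[mu k l] = 0,
          smooth_on (decr_tuples (R:=R) (n:=n)) (mu k),
          forall l, decr_tuples l -> forall j : 'I_n,
            [/\ derivable (mu k) l (ebasis R j),
                'D_(ebasis R j) (mu k) l = Wcoef (mu k l) l j
              & 0 < Wcoef (mu k l) l j],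
          forall l, decr_tuples l -> \sum_(j < n) Wcoef (mu k l) l j = 1
        & forall l, decr_tuples l ->
            mu k l = \sum_(j < n) Wcoef (mu k l) l j * l 0 j]) /\
    (forall l, decr_tuples l -> forall j : 'I_n,
       \sum_(k < n.-1) Wcoef (mu k l) l j = (n.-1)%:R / n%:R).
Proof.
exists (@mu R n); split; last by move=> l hl j; exact: col_sum.
move=> k; rewrite ltn_predRL => hk; split.
- move=> l hl; have [hg hF] := mu_spec hk hl.
  have e1 : lamc l k.+1 = l 0 (Ordinal hk) := lamcE l (Ordinal hk).
  have e2 : lamc l k = l 0 (Ordinal (ltnW hk)) := lamcE l (Ordinal (ltnW hk)).
  rewrite e1 e2; split; first exact: hg.
  rewrite /lam_poly deriv_prod_eval; last by move=> j; rewrite -subr_eq0 (gap_neq hl hg).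
  by rewrite /= -/(Fl l (mu k l)) hF mulr0.
- exact: mu_smooth hk.
- move=> l hl j; have [d D] := mu_derD hk (ebasis R j) hl.
  by split => //; [rewrite D Dval_ebasis | exact: Wcoef_pos].
- by move=> l hl; exact: row_sum.
- by move=> l hl; exact: mu_comb.
Qed.
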